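(* Let $n\ge2$ and let $H_{n,n}$ be the half-graph with vertex set $\{u_1,\dots,u_n\}\cup\{v_1,\dots,v_n\}$ in which $u_i$ is adjacent to $v_j$ exactly when $j\ge i$ (and there are no other edges). Then $\chi_{\mathrm{so}}(H_{n,n})=n+1$ and $\alpha_{\mathrm{od}}(H_{n,n})=2$, and every odd independent set of $H_{n,n}$ with at least two vertices has the form $\{v_i,u_j\}$ with $i<j$.
   Context: An odd independent set in $G=(V,E)$ is an independent set $S$ such that every $v\in V\setminus S$ has either no neighbor or an odd number of neighbors in $S$; $\alpha_{\mathrm{od}}(G)$ is its maximum size. A strong odd coloring is a proper coloring such that for each vertex $v$ every color on $N(v)$ occurs an odd number of times on $N(v)$; $\chi_{\mathrm{so}}(G)$ is the minimum number of colors. *)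

(* Defs.v *)
From mathcomp Require Import all_boot.
Set Implicit Arguments. Unset Strict Implicit. Unset Printing Implicit Defensive.

Section Graphs.
Variable T : finType.
Variable e : rel T.

Definition nbrs_in (v : T) (S : {set T}) : {set T} := [set w in S | e v w].

Definition independent (S : {set T}) : bool :=
  [forall x in S, forall y in S, ~~ e x y].

Definition odd_independent (S : {set T}) : bool :=
  independent S &&
  [forall v, (v \notin S) ==> ((#|nbrs_in v S| == 0) || odd #|nbrs_in v S|)].

Definition alpha_od : nat := \max_(S : {set T} | odd_independent S) #|S|.

Definition strong_odd_coloring (k : nat) (c : T -> 'I_k) : bool :=
  [forall x, forall y, e x y ==> (c x != c y)] &&
  [forall v, forall a : 'I_k,
     let m := #|[set w | e v w & c w == a]| in (m == 0) || odd m].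

Definition has_so_coloring (k : nat) : bool :=
  [exists c : {ffun T -> 'I_k}, strong_odd_coloring c].

(* minimum number of colours; a loopless graph always admits one with #|T|
   colours, so the minimum ranges over k <= #|T| (default #|T|.+1 otherwise) *)
Definition chi_so : nat :=
  \big[minn/#|T|.+1]_(k < #|T|.+1 | has_so_coloring k) k.
End Graphs.

(* Half-graph H_{n,n}: inl i = u_{i+1}, inr j = v_{j+1};
   u_i ~ v_j iff j >= i. *)
Definition half_graph_rel (n : nat) : rel (sum 'I_n 'I_n) :=
  fun x y =>
    match x, y with
    | inl i, inr j => (i <= j)%N
    | inr j, inl i => (i <= j)%N
    | _, _ => false
    end.
Arguments half_graph_rel n : clear implicits.

(* Main.v *)
Require Import Defs.
From mathcomp Require Import all_boot.
From mathcomp Require Import zify.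
Set Implicit Arguments. Unset Strict Implicit. Unset Printing Implicit Defensive.

Lemma two_min n (A : {set 'I_n}) x y : x \in A -> y \in A -> x != y ->
  exists b b2 : 'I_n, [/\ b \in A, b2 \in A, (b < b2)%N &
     forall i, i \in A -> (i <= b2)%N -> i = b \/ i = b2].
Proof.
move=> xA yA xy.
case: (@arg_minnP _ x (mem A) val xA) => b bA bmin.
have : exists z, z \in A :\ b.
  case: (eqVneq x b) => [xb|xb]; last by exists x; rewrite !inE xb.
  by exists y; rewrite !inE -xb eq_sym xy.
case=> z zA.
case: (@arg_minnP _ z (mem (A :\ b)) val zA) => b2; rewrite !inE => /andP[b2b b2A] b2min.
exists b, b2; split=> //.
  rewrite ltn_neqAle bmin // andbT; apply: contra b2b => /eqP h.
  by apply/eqP/val_inj.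
move=> i iA ib2; case: (eqVneq i b) => [->|ib]; first by left.
right; apply/val_inj/eqP; rewrite eqn_leq ib2 b2min //.
by rewrite !inE ib.
Qed.

Lemma two_max n (A : {set 'I_n}) x y : x \in A -> y \in A -> x != y ->
  exists a a2 : 'I_n, [/\ a \in A, a2 \in A, (a < a2)%N &
     forall j, j \in A -> (a <= j)%N -> j = a \/ j = a2].
Proof.
move=> xA yA xy.
case: (@arg_maxnP _ x (mem A) val xA) => b bA bmax.
have : exists z, z \in A :\ b.
  case: (eqVneq x b) => [xb|xb]; last by exists x; rewrite !inE xb.
  by exists y; rewrite !inE -xb eq_sym xy.
case=> z zA.
case: (@arg_maxnP _ z (mem (A :\ b)) val zA) => b2; rewrite !inE => /andP[b2b b2A] b2max.
exists b2, b; split=> //.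
  have hb : (val b2 <= val b)%N by exact: (bmax _ b2A). rewrite ltn_neqAle hb andbT; apply: contra b2b => /eqP h.
  by apply/eqP/val_inj.
move=> i iA ib2; case: (eqVneq i b) => [->|ib]; first by right.
left; apply/val_inj/eqP; rewrite eqn_leq ib2 andbT; apply: (b2max i).
by rewrite !inE ib.
Qed.

Section P2.
Variable n : nat.
Let e := half_graph_rel n.
Variable S : {set 'I_n + 'I_n}.
Hypothesis oS : odd_independent e S.

Lemma indepP x y : x \in S -> y \in S -> ~~ e x y.
Proof.
case/andP: oS => /forallP H _ xS yS.
by move: (H x); rewrite xS /= => /forallP /(_ y); rewrite yS.
Qed.

Lemma not2 v : v \notin S -> #|nbrs_in e v S| = 2 -> False.
Proof.
case/andP: oS => _ /forallP /(_ v) H vS; rewrite vS /= in H.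
by move=> h; rewrite h in H.
Qed.

Lemma noU x y : inl x \in S -> inl y \in S -> x = y.
Proof.
move=> xS yS; apply/eqP/negP => /negP xy.
have := @two_min n [set i | inl i \in S] x y; rewrite !inE => /(_ xS yS xy) [b [b2 [bA b2A bb2 H]]].
rewrite !inE in bA b2A.
apply: (@not2 (inr b2)).
  by apply/negP => h; move: (indepP b2A h); rewrite /e /= leqnn.
have -> : nbrs_in e (inr b2) S = [set inl b; inl b2].
  apply/setP => -[k|k]; rewrite !inE /e /=.
    apply/andP/idP => [[kS kb]|].
      by case: (H k ltac:(by rewrite ?inE) kb) => ->; rewrite eqxx ?orbT.
    by case/orP => /eqP[->]; rewrite ?bS // ?(ltnW bb2) ?leqnn.
  by rewrite andbF.
rewrite cards2; suff -> : (inl b != inl b2 :> 'I_n + 'I_n) by [].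
by apply/negP => /eqP[h]; move: bb2; rewrite h ltnn.
Qed.

Lemma noV x y : inr x \in S -> inr y \in S -> x = y.
Proof.
move=> xS yS; apply/eqP/negP => /negP xy.
have := @two_max n [set i | inr i \in S] x y; rewrite !inE => /(_ xS yS xy) [b [b2 [bA b2A bb2 H]]].
rewrite !inE in bA b2A.
apply: (@not2 (inl b)).
  by apply/negP => h; move: (indepP h bA); rewrite /e /= leqnn.
have -> : nbrs_in e (inl b) S = [set inr b; inr b2].
  apply/setP => -[k|k]; rewrite !inE /e /=.
    by rewrite andbF.
  apply/andP/idP => [[kS kb]|].
    by case: (H k ltac:(by rewrite ?inE) kb) => ->; rewrite eqxx ?orbT.
  by case/orP => /eqP[->]; rewrite ?bS // ?(ltnW bb2) ?leqnn.
rewrite cards2; suff -> : (inr b != inr b2 :> 'I_n + 'I_n) by [].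
by apply/negP => /eqP[h]; move: bb2; rewrite h ltnn.
Qed.

Lemma classify : (2 <= #|S|)%N -> exists i j : 'I_n, (i < j)%N /\ S = [set inr i; inl j].
Proof.
case/card_gt1P => x [y [xS yS xy]].
have key : forall i j, inr i \in S -> inl j \in S -> exists i j : 'I_n, (i < j)%N /\ S = [set inr i; inl j].
  move=> i j iS jS; exists i, j; split.
    by move: (indepP jS iS); rewrite /e /= -ltnNge.
  apply/setP => -[k|k]; rewrite !inE /=; apply/idP/idP.
  - by move=> kS; rewrite (noU kS jS) eqxx ?orbT.
  - by move=> h; first [case/orP: h => /eqP h | move/eqP: h => h]; rewrite h.
  - by move=> kS; rewrite (noV kS iS) eqxx ?orbT.
  - by move=> h; first [case/orP: h => /eqP h | move/eqP: h => h]; rewrite h.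
move: x y xS yS xy => [x|x] [y|y] xS yS xy.
- by move: xy; rewrite (noU xS yS) eqxx.
- exact: key yS xS.
- exact: key xS yS.
- by move: xy; rewrite (noV xS yS) eqxx.
Qed.
End P2.
Lemma step_contra (T : finType) (e : rel T) k (c : T -> 'I_k) x x' y z :
  strong_odd_coloring e c ->
  (forall w, e x w = (w == y) || e x' w) -> ~~ e x' y -> e x' z -> c z = c y -> False.
Proof.
case/andP=> _ /forallP H Hx ny ez czy.
have Hm := forallP (H x) (c y); have Hm' := forallP (H x') (c y).
rewrite /= in Hm Hm'.
have E : [set w | e x w & c w == c y] = y |: [set w | e x' w & c w == c y].
  apply/setP => w; rewrite !inE Hx andb_orl.
  by case: (eqVneq w y) => [->|]; rewrite ?eqxx.
rewrite E cardsU1 inE (negbTE ny) /= in Hm.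
have pos : (0 < #|[set w | e x' w & c w == c y]|)%N.
  by apply/card_gt0P; exists z; rewrite inE ez czy eqxx.
move: Hm Hm' pos; case: #|_| => [|m] //= ; by case: (odd m).
Qed.

Section P1.
Variable n : nat.
Hypothesis hn : (2 <= n)%N.
Let e := half_graph_rel n.

Lemma lower k : has_so_coloring e k -> (n.+1 <= k)%N.
Proof.
case/existsP => c sc.
have n0 : (0 < n)%N by apply: leq_trans hn.
pose u0 : 'I_n := Ordinal n0.
have Hv : forall i j : 'I_n, (i < j)%N -> c (inr i) = c (inr j) -> False.
  move=> i j ij cij.
  pose i' : 'I_n := Ordinal (leq_ltn_trans ij (ltn_ord j)).
  apply: (@step_contra _ e k c (inl i) (inl i') (inr i) (inr j) sc).
  - case=> w; rewrite /e /= //.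
    idtac.
    rewrite leq_eqVlt; congr (_ || _); apply/eqP/eqP => [/val_inj ->|[->]] //.
  - by rewrite /e /= ltnn.
  - by rewrite /e /=.
  - by rewrite cij.
have Hu : forall j : 'I_n, c (inl u0) = c (inr j) -> False.
  move=> j h; case/andP: sc => /forallP /(_ (inl u0)) /forallP /(_ (inr j)).
  by rewrite /e /= h eqxx.
pose f (o : option 'I_n) : 'I_k := if o is Some j then c (inr j) else c (inl u0).
have finj : injective f.
  move=> [a|] [b|] //= h.
  - case: (ltngtP a b) => [ab|ba|ab]; first by case: (Hv _ _ ab h).
      by case: (Hv _ _ ba (esym h)).
    by congr Some; apply: val_inj.
  - by case: (Hu _ (esym h)).
  - by case: (Hu _ h).
by have := leq_card f finj; rewrite card_option !card_ord.
Qed.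

Definition col (x : 'I_n + 'I_n) : 'I_n.+1 :=
  match x with
  | inl i => inord (if val i == 0 then n else (val i).-1)
  | inr j => inord (val j)
  end.

Lemma col_inl i i' : col (inl i) = col (inl i') -> i = i'.
Proof.
move=> /(congr1 val) /=; rewrite !inordK; last 2 first.
- by case: (_ == 0); [ | have := ltn_ord i'; lia].
- by case: (_ == 0); [ | have := ltn_ord i; lia].
move=> h; apply: val_inj; move: h.
have := ltn_ord i; have := ltn_ord i'.
case: eqP => h1; case: eqP => h2 /=; lia.
Qed.

Lemma col_inr j j' : col (inr j) = col (inr j') -> j = j'.
Proof.
move=> /(congr1 val) /=; rewrite !inordK; last 2 first.
- by have := ltn_ord j'; lia.
- by have := ltn_ord j; lia.
by move=> h; apply: val_inj.
Qed.

Lemma col_proper (i j : 'I_n) : (i <= j)%N -> col (inl i) != col (inr j).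
Proof.
move=> ij; apply/negP => /eqP /(congr1 val) /=; rewrite !inordK; last 2 first.
- by have := ltn_ord j; lia.
- by case: (_ == 0); [ | have := ltn_ord i; lia].
have := ltn_ord i; have := ltn_ord j.
case: eqP => h1 /=; lia.
Qed.

Lemma upper : has_so_coloring e n.+1.
Proof.
apply/existsP; exists [ffun x => col x]; apply/andP; split.
  apply/forallP => -[x|x]; apply/forallP => -[y|y]; rewrite /e /= ?ffunE //;
    apply/implyP => h.
  - exact: col_proper.
  - by rewrite eq_sym; apply: col_proper.
apply/forallP => v; apply/forallP => a /=.
suff : (#|[set w | e v w & [ffun x => col x] w == a]| <= 1)%N.
  by case: #|_| => [|[|]].
apply/card_le1P => x; rewrite inE => /andP[hx /eqP cx] y; rewrite !inE.
apply/andP/eqP => [[hy /eqP cy]|->]; last by rewrite hx cx.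
rewrite !ffunE in cx cy.
move: hx hy cx cy; case: v => v; case: x => x; case: y => y; rewrite /e //= => _ _ cx cy.
- by rewrite (col_inr (etrans cy (esym cx))).
- by rewrite (col_inl (etrans cy (esym cx))).
Qed.

Lemma chi_val : chi_so e = n.+1.
Proof.
rewrite /chi_so card_sum !card_ord.
have lt : (n.+1 < (n + n).+1)%N by lia.
apply/eqP; rewrite eqn_leq; apply/andP; split.
  rewrite -big_filter.
  have : Ordinal lt \in [seq i : 'I_(n + n).+1 <- index_enum 'I_(n + n).+1 | has_so_coloring e i].
    by rewrite mem_filter upper mem_index_enum.
  elim: [seq _ <- _ | _] => [|x r IH] //.
  rewrite inE big_cons => /orP [/eqP <-|/IH h]; first exact: geq_minl.
  by rewrite geq_min h orbT.
apply: (big_ind (fun x => n.+1 <= x)%N) => //.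
- by lia.
- by move=> a b ha hb; rewrite leq_min ha hb.
- by move=> i hi; apply: lower.
Qed.
End P1.

Theorem proposition11 (n : nat) (hn : (2 <= n)%N) :
  chi_so (half_graph_rel n) = n.+1 /\
  alpha_od (half_graph_rel n) = 2 /\
  (forall S : {set (sum 'I_n 'I_n)},
     odd_independent (half_graph_rel n) S -> (2 <= #|S|)%N ->
     exists i j : 'I_n, (i < j)%N /\ S = [set inr i; inl j]).
Proof.
have cls := fun S (oS : odd_independent (half_graph_rel n) S) => classify oS.
split; first exact: chi_val.
split; last exact: cls.
apply/eqP; rewrite eqn_leq; apply/andP; split.
  apply/bigmax_leqP => S oS.
  case: (leqP 2 #|S|) => [h|h]; last by apply: ltnW.
  by have [i [j [_ ->]]] := cls S oS h; rewrite cards2.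
have n0 : (0 < n)%N by apply: leq_trans hn.
pose i0 : 'I_n := Ordinal n0. pose i1 : 'I_n := Ordinal hn.
have -> : 2 = #|[set inr i0; inl i1] : {set 'I_n + 'I_n}| by rewrite cards2.
apply: leq_bigmax_cond; apply/andP; split.
  apply/forallP => x; apply/implyP; rewrite !inE => hx.
  apply/forallP => y; apply/implyP; rewrite !inE => hy.
  by case/orP: hx => /eqP ->; case/orP: hy => /eqP ->.
apply/forallP => v; apply/implyP => _.
suff : (#|nbrs_in (half_graph_rel n) v [set inr i0; inl i1]| <= 1)%N.
  by case: #|_| => [|[|]].
case: v => v.
  rewrite -(cards1 (inr i0 : 'I_n + 'I_n)); apply: subset_leq_card.
  apply/subsetP => -[w|w]; rewrite !inE ?andbF //=;
    move/andP=> [h _]; first [case/orP: h => /eqP h; rewrite h | move/eqP: h => h; rewrite h] => //.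
rewrite -(cards1 (inl i1 : 'I_n + 'I_n)); apply: subset_leq_card.
apply/subsetP => -[w|w]; rewrite !inE ?andbF //=;
  move/andP=> [h _]; first [case/orP: h => /eqP h; rewrite h | move/eqP: h => h; rewrite h] => //.
Qed.
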